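(* Let $S$ be a random walk on $\mathbb{Z}^2$ with symmetric, sub-Gaussian increments and let $\mathsf c\in[1,\infty)$ be as in the context. For every $f:\mathbb{Z}^2\to\mathbb{R}$, $t\ge0$, $n\in\mathbb{N}$ and $p\in[1,\infty]$, $$\Big\|\frac{q^f_n}{w_t}\Big\|_{\ell^p}\le\mathsf c\,e^{2\mathsf ct^2n}\Big\|\frac f{w_t}\Big\|_{\ell^p},\qquad\Big\|\frac{q^f_n}{w_t}\Big\|_{\ell^\infty}\le\frac{\mathsf c\,e^{2\mathsf ct^2n}}{n^{1/p}}\Big\|\frac f{w_t}\Big\|_{\ell^p},$$ with the convention $n^{1/\infty}:=1$.
   Context: Assumption on the walk: $q_1(x)=q_1(-x)$ and there is $c>0$ with $\sum_xe^{tx^a}q_1(x)\le e^{ct^2/2}$ for all $t\in\mathbb{R}$, $a=1,2$. Here $q_n(x):=\mathrm{P}(S_n=x\mid S_0=0)$, $q^f_n(x):=\sum_{z\in\mathbb{Z}^2}q_n(x-z)f(z)$, $w_t(x):=e^{-t|x|}$, and $\|\cdot\|_{\ell^p}$ is the $\ell^p(\mathbb{Z}^2)$ norm. $\mathsf c\in[1,\infty)$ is a constant (depending only on the walk) such that for all $t\ge0$, $n\in\mathbb{N}$, $a=1,2$: $\sum_xe^{tx^a}q_n(x)\le e^{\mathsf ct^2n/2}$, $\sum_xe^{tx^a}q_n(x)^2/q_{2n}(0)\le e^{\mathsf ct^2n/2}$, $\sum_xe^{t|x|}q_n(x)\le\mathsf ce^{2\mathsf ct^2n}$, $\sup_xe^{t|x|}q_n(x)\le\mathsf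 ce^{2\mathsf ct^2n}/n$ (such a constant exists). *)

(* Defs.v *)
From HB Require Import structures.
From mathcomp Require Import all_boot all_order all_algebra.
From mathcomp Require Import all_classical all_reals.
From mathcomp Require Import ereal topology normedtype sequences esum exp.
Set Implicit Arguments. Unset Strict Implicit. Unset Printing Implicit Defensive.
Import Order.TTheory GRing.Theory Num.Theory.
Local Open Scope classical_set_scope.
Local Open Scope ring_scope.

Definition Z2 := (int * int)%type.

Section Defs.
Variable R : realType.

Definition Z2_0 : Z2 := (0%Z, 0%Z).
Definition Z2_sub (x z : Z2) : Z2 := ((x.1 - z.1)%R, (x.2 - z.2)%R).
Definition Z2_opp (x : Z2) : Z2 := ((- x.1)%R, (- x.2)%R).
(* coordinate x^a, a = 1,2 (encoded by a : 'I_2, a = 0 <-> first coordinate) *)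
Definition Z2_coord (a : 'I_2) (x : Z2) : R :=
  if (a == 0 :> nat) then (x.1)%:~R else (x.2)%:~R.
Definition Z2_norm (x : Z2) : R := Num.sqrt ((x.1)%:~R ^+ 2 + (x.2)%:~R ^+ 2).

Definition esumZ2 (g : Z2 -> \bar R) : \bar R := \esum_(x in [set: Z2]) g x.

(* sum over Z^2 of a real family (meaningful for absolutely summable families):
   sum of positive parts minus sum of negative parts *)
Definition sumZ2 (g : Z2 -> R) : R :=
  fine (esumZ2 (fun x => (Num.max (g x) 0)%:E))
  - fine (esumZ2 (fun x => (Num.max (- g x) 0)%:E)).

(* q_n(x) = P(S_n = x | S_0 = 0), as the n-fold convolution of the step law q1 *)
Definition delta0 (x : Z2) : R := if x == Z2_0 then 1 else 0.
Definition qn (q1 : Z2 -> R) (n : nat) : Z2 -> R :=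
  iter n (fun q x => sumZ2 (fun z => q (Z2_sub x z) * q1 z)) delta0.

Definition qfn (q1 : Z2 -> R) (n : nat) (f : Z2 -> R) (x : Z2) : R :=
  sumZ2 (fun z => qn q1 n (Z2_sub x z) * f z).

Definition wt (t : R) (x : Z2) : R := expR (- (t * Z2_norm x)).

Definition lpnorm (p : \bar R) (g : Z2 -> R) : \bar R :=
  if p == +oo%E then ereal_sup [set (`|g x|)%:E | x in [set: Z2]]
  else poweR (esumZ2 (fun x => (`|g x| `^ fine p)%:E)) (fine p)^-1.

Definition nroot_p (n : nat) (p : \bar R) : R :=
  if p == +oo%E then 1 else n%:R `^ (fine p)^-1.

End Defs.

(* Main.v *)
Require Import Defs.
From HB Require Import structures.
From mathcomp Require Import all_boot all_order all_algebra.
From mathcomp Require Import all_classical all_reals.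
From mathcomp Require Import ereal topology normedtype sequences esum exp.
From mathcomp Require Import lra ring.
Import Order.TTheory GRing.Theory Num.Theory.
Local Open Scope classical_set_scope.
Local Open Scope ring_scope.
Set Implicit Arguments. Unset Strict Implicit. Unset Printing Implicit Defensive.

Section Aux.
Variable R : realType.
Local Open Scope ereal_scope.

Lemma esumZ2_ge0 (a : Z2 -> \bar R) : (forall x, 0 <= a x) -> 0 <= esumZ2 a.
Proof. by move=> a0; apply: esum_ge0 => x _; exact: a0. Qed.

Lemma le_esumZ2 (a b : Z2 -> \bar R) : (forall x, a x <= b x) -> esumZ2 a <= esumZ2 b.
Proof. by move=> ab; apply: le_esum => x _; exact: ab. Qed.

Lemma esumZ2_scale_le (k : R) (a : Z2 -> \bar R) : (0 <= k)%R -> (forall x, 0 <= a x) ->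
  esumZ2 (fun x => k%:E * a x) <= k%:E * esumZ2 a.
Proof.
move=> k0 a0; apply: ge_ereal_sup => _ [X [finX _] <-].
rewrite -ge0_mule_fsumr//; apply: lee_wpmul2l; first by rewrite lee_fin.
by apply: ereal_sup_ubound; exists X.
Qed.

Lemma esumZ2_scale (k : R) (a : Z2 -> \bar R) : (0 <= k)%R -> (forall x, 0 <= a x) ->
  esumZ2 (fun x => k%:E * a x) = k%:E * esumZ2 a.
Proof.
move=> k0 a0; apply/le_anti; rewrite esumZ2_scale_le//=.
have [->|kn0] := eqVneq k 0%R.
  by rewrite mul0e; apply: esumZ2_ge0 => x; rewrite mul0e.
have kp : (0 < k)%R by rewrite lt_def kn0.
have H := @esumZ2_scale_le k^-1 (fun x => k%:E * a x).
have -> : esumZ2 a = esumZ2 (fun x => k^-1%:E * (k%:E * a x)).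
  by apply: eq_esum => x _; rewrite muleA -EFinM mulVf// mul1e.
rewrite (le_trans (lee_wpmul2l _ (H _ _)))//.
all: try by rewrite lee_fin.
all: try by rewrite invr_ge0.
all: try by move=> x; rewrite mule_ge0// lee_fin.
all: try by rewrite muleA -EFinM divff// mul1e.
Qed.

Lemma esumZ2_reindex (e : Z2 -> Z2) (a : Z2 -> \bar R) : bijective e ->
  esumZ2 (fun x => a (e x)) = esumZ2 a.
Proof.
move=> be; rewrite /esumZ2 [in RHS](reindex_esum [set: Z2] [set: Z2] e)//.
by rewrite setTT_bijective.
Qed.

Lemma esumZ2_swap (a : Z2 -> Z2 -> \bar R) : (forall x y, 0 <= a x y) ->
  esumZ2 (fun x => esumZ2 (fun y => a x y)) = esumZ2 (fun y => esumZ2 (fun x => a x y)).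
Proof.
move=> a0; rewrite /esumZ2 !esum_esum//.
have -> : [set: Z2] `*`` (fun=> [set: Z2]) = [set: Z2 * Z2].
  by apply/seteqP; split.
rewrite [in RHS](reindex_esum [set: Z2 * Z2] [set: Z2 * Z2] (fun k : Z2 * Z2 => (k.2, k.1)))//.
by rewrite setTT_bijective; exists (fun k : Z2 * Z2 => (k.2, k.1)) => -[].
Qed.

End Aux.

Section Aux2.
Variable R : realType.

Lemma max_abs_split (x : R) : `|x| = Num.max x 0 + Num.max (- x) 0.
Proof.
have [x0|x0] := leP 0 x.
  rewrite ger0_norm// !maxEle; case: (leP x 0) => h1; case: (leP (-x) 0) => h2; lra.
rewrite ltr0_norm// !maxEle; case: (leP x 0) => h1; case: (leP (-x) 0) => h2; lra.
Qed.

Lemma sumZ2_ge0 (h : Z2 -> R) : (forall z, 0 <= h z) -> 0 <= sumZ2 h.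
Proof.
move=> h0; rewrite /sumZ2.
have -> : esumZ2 (fun x => (Num.max (- h x) 0)%:E) = 0%E.
  by rewrite /esumZ2 esum1// => x _; congr (_%:E); rewrite maxEle; case: (leP (- h x) 0) => //; have := h0 x; lra.
rewrite subr0; apply: fine_ge0; apply: esumZ2_ge0 => x.
by rewrite lee_fin le_max lexx orbT.
Qed.

Lemma sumZ2_abs (h : Z2 -> R) :
  ((`|sumZ2 h|)%:E <= esumZ2 (fun z => (`|h z|)%:E))%E.
Proof.
rewrite /sumZ2.
have -> : esumZ2 (fun z => (`|h z|)%:E) =
   (esumZ2 (fun x => (Num.max (h x) 0)%:E) + esumZ2 (fun x => (Num.max (- h x) 0)%:E))%E.
  rewrite /esumZ2 -esumD; last 2 first.
  - by move=> x _; rewrite lee_fin le_max lexx orbT.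
  - by move=> x _; rewrite lee_fin le_max lexx orbT.
  by apply: eq_esum => x _; rewrite max_abs_split.
have P0 : (0 <= esumZ2 (fun x => (Num.max (h x) 0)%:E))%E.
  by apply: esumZ2_ge0 => x; rewrite lee_fin le_max lexx orbT.
have N0 : (0 <= esumZ2 (fun x => (Num.max (- h x) 0)%:E))%E.
  by apply: esumZ2_ge0 => x; rewrite lee_fin le_max lexx orbT.
move: P0 N0.
case: (esumZ2 (fun x => (Num.max (h x) 0)%:E)) => [p| |]//;
case: (esumZ2 (fun x => (Num.max (- h x) 0)%:E)) => [m| |]// p0 m0.
- rewrite /= lee_fin; rewrite lee_fin in p0 m0.
  by rewrite (le_trans (ler_normB _ _))// !ger0_norm.
- by rewrite /= leey.
- by rewrite /= leey.
- by rewrite /= leey.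
Qed.

Lemma qn_ge0 (q1 : Z2 -> R) (q1_ge0 : forall x, 0 <= q1 x) m x : 0 <= qn q1 m x.
Proof.
elim: m x => [|m IH] x.
  by rewrite /qn /= /delta0; case: ifP.
rewrite /qn iterS -/(qn q1 m); apply: sumZ2_ge0 => z.
by rewrite mulr_ge0.
Qed.

Lemma sqrt_tri (u v w y : R) :
  Num.sqrt ((u + w) ^+ 2 + (v + y) ^+ 2) <=
  Num.sqrt (u ^+ 2 + v ^+ 2) + Num.sqrt (w ^+ 2 + y ^+ 2).
Proof.
set A := u ^+ 2 + v ^+ 2; set B := w ^+ 2 + y ^+ 2.
have A0 : 0 <= A by rewrite addr_ge0 ?sqr_ge0.
have B0 : 0 <= B by rewrite addr_ge0 ?sqr_ge0.
rewrite -(@ler_pXn2r _ 2)//; last 2 first.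
- by rewrite nnegrE sqrtr_ge0.
- by rewrite nnegrE addr_ge0 ?sqrtr_ge0.
rewrite sqr_sqrtr; last by rewrite addr_ge0 ?sqr_ge0.
rewrite [X in _ <= X]sqrrD !sqr_sqrtr// -sqrtrM//.
suff h : u * w + v * y <= Num.sqrt (A * B).
  rewrite /A /B; move: h; set s := Num.sqrt _; move=> h.
  have : (u + w) ^+ 2 + (v + y) ^+ 2 = u ^+ 2 + v ^+ 2 + (w ^+ 2 + y ^+ 2) + (u * w + v * y) *+ 2.
    by rewrite !sqrrD; rewrite mulrnDl !mulr2n; ring.
  move=> ->; rewrite !mulr2n; lra.
have [h|h] := leP (u * w + v * y) 0.
  by rewrite (le_trans h)// sqrtr_ge0.
rewrite -(@ler_pXn2r _ 2)//; last 2 first.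
- by rewrite nnegrE ltW.
- by rewrite nnegrE sqrtr_ge0.
rewrite sqr_sqrtr ?mulr_ge0// /A /B.
rewrite -subr_ge0.
have -> : (u ^+ 2 + v ^+ 2) * (w ^+ 2 + y ^+ 2) - (u * w + v * y) ^+ 2 = (u * y - v * w) ^+ 2.
  by ring.
by rewrite sqr_ge0.
Qed.

Lemma Z2_norm_tri (x z : Z2) : Z2_norm R x <= Z2_norm R (Z2_sub x z) + Z2_norm R z.
Proof.
rewrite /Z2_norm /Z2_sub /=.
have e1 : (x.1)%:~R = ((x.1 - z.1)%R)%:~R + (z.1)%:~R :> R by rewrite -intrD subrK.
have e2 : (x.2)%:~R = ((x.2 - z.2)%R)%:~R + (z.2)%:~R :> R by rewrite -intrD subrK.
by rewrite [in X in Num.sqrt X <= _]e1 [in X in Num.sqrt X <= _]e2 sqrt_tri.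
Qed.

Lemma Z2_norm_ge0 x : 0 <= Z2_norm R x.
Proof. exact: sqrtr_ge0. Qed.

End Aux2.

Section Aux3.
Variable R : realType.

Lemma young_tan (P m g : R) : 1 <= P -> 0 <= m -> 0 <= g ->
  P * m `^ (P - 1) * g <= (P - 1) * m `^ P + g `^ P.
Proof.
move=> P1 m0 g0.
have [->|P1'] := eqVneq P 1.
  by rewrite subrr powRr0 mul0r add0r powRr1// !mul1r.
have P1s : 1 < P by rewrite lt_def P1' P1.
have Pm1 : 0 < P - 1 by rewrite subr_gt0.
have P0 : 0 < P by lra.
have H := @conjugate_powR R g (m `^ (P - 1)) P (P / (P - 1)) g0 (powR_ge0 _ _) P0
  (divr_gt0 P0 Pm1).
have e : P^-1 + (P / (P - 1))^-1 = 1.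
  by field; apply/andP; split; rewrite ?gt_eqF//.
have {H} H := H e.
rewrite -powRrM mulrCA divff ?gt_eqF// mulr1 in H.
have H2 := ler_wpM2l (ltW P0) H.
have e2 : P * (g `^ P / P + m `^ P / (P / (P - 1))) = (P - 1) * m `^ P + g `^ P.
  by field; apply/andP; split; rewrite ?gt_eqF//.
by rewrite e2 in H2; rewrite -mulrA [m `^ _ * g]mulrC.
Qed.

End Aux3.

Section Main.
Variables (R : realType) (q1 : Z2 -> R) (c t : R) (n : nat) (f : Z2 -> R).

Definition Kf (y : Z2) : R := expR (t * Z2_norm R y) * qn q1 n y.
Definition Gf (z : Z2) : R := `|f z / wt t z|.
Definition Ff (x : Z2) : R := qfn q1 n f x / wt t x.
Definition Cc : R := c * expR (2 * c * t ^+ 2 * n%:R).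

End Main.

Section Main2.
Local Open Scope ereal_scope.

Lemma wt_inv (R : realType) (t : R) x (a : R) : (a / wt t x = a * expR (t * Z2_norm R x))%R.
Proof. by rewrite /wt expRN invrK. Qed.

Lemma Kf_ge0 (R : realType) q1 (t : R) n y : (forall x, 0 <= q1 x)%R -> (0 <= Kf q1 t n y)%R.
Proof. by move=> q0; rewrite /Kf mulr_ge0// ?expR_ge0// qn_ge0. Qed.

Lemma Gf_ge0 (R : realType) (t : R) f z : (0 <= Gf t f z)%R.
Proof. exact: normr_ge0. Qed.

Lemma bound1 (R : realType) q1 (t : R) n f (q1_ge0 : forall x, (0 <= q1 x)%R) (ht : (0 <= t)%R) x :
  (`|Ff q1 t n f x|)%:E <= esumZ2 (fun z => (Kf q1 t n (Z2_sub x z) * Gf t f z)%:E).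
Proof.
rewrite /Ff wt_inv normrM (ger0_norm (expR_ge0 _)) mulrC EFinM.
rewrite (le_trans (lee_wpmul2l _ (sumZ2_abs _))) ?lee_fin ?expR_ge0//.
rewrite -esumZ2_scale; last 2 first.
- exact: expR_ge0.
- by move=> z; rewrite lee_fin.
apply: le_esumZ2 => z; rewrite -EFinM lee_fin.
rewrite /Kf /Gf wt_inv normrM (ger0_norm (qn_ge0 q1_ge0 _ _)).
rewrite normrM (ger0_norm (expR_ge0 _)).
have h : (expR (t * Z2_norm R x) <= expR (t * Z2_norm R (Z2_sub x z)) * expR (t * Z2_norm R z))%R.
  by rewrite -expRD ler_expR -mulrDr ler_wpM2l// Z2_norm_tri.
have q0 := qn_ge0 q1_ge0 n (Z2_sub x z).
have f0 := normr_ge0 (f z).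
rewrite (le_trans (ler_wpM2r _ h)) ?mulr_ge0//.
by rewrite le_eqVlt; apply/orP; left; apply/eqP; ring.
Qed.

End Main2.

Section Main3.
Local Open Scope ereal_scope.

Lemma Ksum1 (R : realType) q1 (c t : R) n
  (hc3 : esumZ2 (fun y => (Kf q1 t n y)%:E) <= (Cc c t n)%:E) x :
  esumZ2 (fun z => (Kf q1 t n (Z2_sub x z))%:E) <= (Cc c t n)%:E.
Proof.
rewrite (@esumZ2_reindex _ (Z2_sub x) (fun y => (Kf q1 t n y)%:E))//.
exists (Z2_sub x) => z; case: z => a b; rewrite /Z2_sub /=; congr pair; ring.
Qed.

Lemma Ksum2 (R : realType) q1 (c t : R) n
  (hc3 : esumZ2 (fun y => (Kf q1 t n y)%:E) <= (Cc c t n)%:E) z :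
  esumZ2 (fun x => (Kf q1 t n (Z2_sub x z))%:E) <= (Cc c t n)%:E.
Proof.
rewrite (@esumZ2_reindex _ (fun x => Z2_sub x z) (fun y => (Kf q1 t n y)%:E))//.
exists (fun y : Z2 => ((y.1 + z.1)%R, (y.2 + z.2)%R)) => y; case: y => a b;
  rewrite /Z2_sub /=; congr pair; ring.
Qed.

End Main3.

Section Main4.
Local Open Scope ereal_scope.

Lemma jensen (R : realType) q1 (c t : R) n f (q1_ge0 : forall x, (0 <= q1 x)%R)
  (ht : (0 <= t)%R) (Cpos : (0 < Cc c t n)%R)
  (hc3 : esumZ2 (fun y => (Kf q1 t n y)%:E) <= (Cc c t n)%:E) (P : R) (P1 : (1 <= P)%R) x :
  (`|Ff q1 t n f x| `^ P)%:E <=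
    ((Cc c t n) `^ (P - 1))%:E * esumZ2 (fun z => (Kf q1 t n (Z2_sub x z) * Gf t f z `^ P)%:E).
Proof.
have B1 := @bound1 R q1 t n f q1_ge0 ht x.
have KS := Ksum1 hc3 x.
move: B1 KS.
move: (Cc c t n) Cpos => C Cpos B1 KS.
have E0 : 0 <= esumZ2 (fun z => (Kf q1 t n (Z2_sub x z) * Gf t f z `^ P)%:E).
  by apply: esumZ2_ge0 => z; rewrite lee_fin mulr_ge0// ?powR_ge0// Kf_ge0.
move: (`|Ff q1 t n f x|%R) (normr_ge0 (Ff q1 t n f x)) B1 => a a0 B1.
have P0 : (0 < P)%R by apply: lt_le_trans P1.
have Pm1 : (0 <= P - 1)%R by rewrite subr_ge0.
have [->|an0] := eqVneq a 0%R.
  by rewrite powR0 ?gt_eqF// mule_ge0// lee_fin powR_ge0.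
have ap : (0 < a)%R by rewrite lt_def an0 a0.
pose m := (a / C)%R.
have m0 : (0 < m)%R by rewrite divr_gt0.
have am : a = (m * C)%R by rewrite /m divfK// gt_eqF.
have key : ((P * m `^ (P - 1) * a)%:E <= ((P - 1) * m `^ P)%:E * C%:E +
      esumZ2 (fun z => (Kf q1 t n (Z2_sub x z) * Gf t f z `^ P)%:E)).
  have c0 : (0 <= P * m `^ (P - 1))%R by rewrite mulr_ge0// ?powR_ge0// ltW.
  rewrite EFinM (le_trans (lee_wpmul2l _ B1)) ?lee_fin//.
  rewrite -esumZ2_scale//; last by move=> z; rewrite lee_fin mulr_ge0// ?Kf_ge0// Gf_ge0.
  apply: (@le_trans _ _ (esumZ2 (fun z => ((P - 1) * m `^ P)%:E * (Kf q1 t n (Z2_sub x z))%:E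
       + (Kf q1 t n (Z2_sub x z) * Gf t f z `^ P)%:E))).
    apply: le_esumZ2 => z; rewrite -!EFinM -EFinD lee_fin.
    have K0 := Kf_ge0 t n (Z2_sub x z) q1_ge0.
    have Y := young_tan P1 (ltW m0) (Gf_ge0 t f z).
    have := ler_wpM2l K0 Y; rewrite mulrDr.
    have -> : (P * m `^ (P - 1) * (Kf q1 t n (Z2_sub x z) * Gf t f z) =
       Kf q1 t n (Z2_sub x z) * (P * m `^ (P - 1) * Gf t f z))%R by ring.
    have -> : ((P - 1) * m `^ P * Kf q1 t n (Z2_sub x z) =
       Kf q1 t n (Z2_sub x z) * ((P - 1) * m `^ P))%R by ring.
    by [].
  rewrite /esumZ2 esumD; last 2 first.
  - by move=> z _; rewrite -EFinM lee_fin mulr_ge0 ?Kf_ge0// mulr_ge0 ?powR_ge0.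
  - by move=> z _; rewrite lee_fin mulr_ge0// ?powR_ge0// Kf_ge0.
  rewrite -!/(esumZ2 _) esumZ2_scale; last 2 first.
  - by rewrite mulr_ge0// ?powR_ge0.
  - by move=> z; rewrite lee_fin Kf_ge0.
  by rewrite leeD2r// lee_wpmul2l// lee_fin mulr_ge0// ?powR_ge0.
move: E0 key.
case: (esumZ2 _) => [e| |]// E0 key; last first.
  by rewrite gt0_muley ?leey// lte_fin powR_gt0.
rewrite -EFinM lee_fin; rewrite -EFinM -EFinD lee_fin in key.
have e1 : (m `^ (P - 1) * a = m `^ P * C)%R.
  by rewrite am mulrA [X in (X * _)%R]mulrC mulr_powRB1// ltW.
rewrite -mulrA e1 in key.
have key2 : (m `^ P * C <= e)%R by lra.
have -> : (a `^ P = (m `^ P * C) * C `^ (P - 1))%R.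
  by rewrite am powRM ?ltW// -(mulr_powRB1 (ltW Cpos) P0) mulrA.
by rewrite [X in (X <= _)%R]mulrC ler_wpM2l ?powR_ge0.
Qed.

End Main4.

Section Main5.
Local Open Scope ereal_scope.

Lemma sum_bound (R : realType) q1 (c t : R) n f (q1_ge0 : forall x, (0 <= q1 x)%R)
  (ht : (0 <= t)%R) (Cpos : (0 < Cc c t n)%R)
  (hc3 : esumZ2 (fun y => (Kf q1 t n y)%:E) <= (Cc c t n)%:E) (P : R) (P1 : (1 <= P)%R) :
  esumZ2 (fun x => (`|Ff q1 t n f x| `^ P)%:E) <=
   ((Cc c t n) `^ P)%:E * esumZ2 (fun z => (Gf t f z `^ P)%:E).
Proof.
have P0 : (0 < P)%R by apply: lt_le_trans P1.
set C := Cc c t n.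
apply: (@le_trans _ _ (esumZ2 (fun x => (C `^ (P - 1))%:E *
   esumZ2 (fun z => (Kf q1 t n (Z2_sub x z) * Gf t f z `^ P)%:E)))).
  by apply: le_esumZ2 => x; apply: jensen.
have A0 : forall x z, 0 <= (Kf q1 t n (Z2_sub x z) * Gf t f z `^ P)%:E.
  by move=> x z; rewrite lee_fin mulr_ge0 ?Kf_ge0// powR_ge0.
rewrite esumZ2_scale ?powR_ge0//; last by move=> x; apply: esumZ2_ge0 => z.
rewrite esumZ2_swap//.
have -> : esumZ2 (fun z => esumZ2 (fun x => (Kf q1 t n (Z2_sub x z) * Gf t f z `^ P)%:E))
   = esumZ2 (fun z => (Gf t f z `^ P)%:E * esumZ2 (fun x => (Kf q1 t n (Z2_sub x z))%:E)).
  apply: eq_esum => z _; rewrite -esumZ2_scale ?powR_ge0//; last first.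
    by move=> x; rewrite lee_fin Kf_ge0.
  by apply: eq_esum => x _; rewrite -EFinM mulrC.
have -> : (C `^ P = C `^ (P - 1) * C)%R by rewrite mulrC mulr_powRB1// ltW.
rewrite EFinM -muleA lee_wpmul2l ?lee_fin ?powR_ge0//.
apply: (@le_trans _ _ (esumZ2 (fun z => C%:E * (Gf t f z `^ P)%:E))).
  apply: le_esumZ2 => z; rewrite muleC; apply: lee_wpmul2r; [by rewrite lee_fin powR_ge0 | exact: Ksum2].
rewrite esumZ2_scale//; first exact: ltW.
by move=> z; rewrite lee_fin powR_ge0.
Qed.

Lemma claim_fin1 (R : realType) q1 (c t : R) n f (q1_ge0 : forall x, (0 <= q1 x)%R)
  (ht : (0 <= t)%R) (Cpos : (0 < Cc c t n)%R)
  (hc3 : esumZ2 (fun y => (Kf q1 t n y)%:E) <= (Cc c t n)%:E) (P : R) (P1 : (1 <= P)%R) :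
  lpnorm P%:E (Ff q1 t n f) <= (Cc c t n)%:E * lpnorm P%:E (fun x => (f x / wt t x)%R).
Proof.
have P0 : (0 < P)%R by apply: lt_le_trans P1.
rewrite /lpnorm /=.
have S0 : 0 <= esumZ2 (fun z => (Gf t f z `^ P)%:E).
  by apply: esumZ2_ge0 => z; rewrite lee_fin powR_ge0.
apply: (@le_trans _ _ ((((Cc c t n) `^ P)%:E * esumZ2 (fun z => (Gf t f z `^ P)%:E)) `^ P^-1)).
  apply: gt0_ler_poweR; first by rewrite invr_ge0 ltW.
  - by rewrite in_itv /= leey andbT; apply: esumZ2_ge0 => x; rewrite lee_fin powR_ge0.
  - by rewrite in_itv /= leey andbT mule_ge0// lee_fin powR_ge0.
  exact: sum_bound.
rewrite poweRM ?lee_fin ?powR_ge0// poweR_EFin -powRrM divff ?gt_eqF// powRr1//; exact: ltW.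
Qed.

End Main5.

Lemma powR_inv_base (R : realType) (y r : R) : (0 < y)%R -> ((y^-1) `^ r = (y `^ r)^-1)%R.
Proof.
move=> y0.
have h : ((y^-1) `^ r * y `^ r = 1)%R.
  by rewrite -powRM ?invr_ge0 ?ltW// mulVf ?gt_eqF// powR1.
apply: (@mulIf _ (y `^ r)); first by rewrite gt_eqF// powR_gt0.
by rewrite h mulVf// gt_eqF// powR_gt0.
Qed.

Section Main6.
Local Open Scope ereal_scope.

Lemma claim_inf (R : realType) q1 (c t : R) n f (q1_ge0 : forall x, (0 <= q1 x)%R)
  (ht : (0 <= t)%R) (Cpos : (0 < Cc c t n)%R)
  (hc3 : esumZ2 (fun y => (Kf q1 t n y)%:E) <= (Cc c t n)%:E) :
  lpnorm +oo (Ff q1 t n f) <= (Cc c t n)%:E * lpnorm +oo (fun x => (f x / wt t x)%R).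
Proof.
rewrite /lpnorm /=.
have Gle : forall z, (Gf t f z)%:E <= ereal_sup [set (`|f x / wt t x|)%:E | x in [set: Z2]].
  by move=> z; apply: ereal_sup_ubound; exists z.
move: (ereal_sup [set (`|f x / wt t x|)%:E | x in [set: Z2]]) Gle => M Gle.
case: M Gle => [mm| |] Gle.
- have mm0 : (0 <= mm)%R by rewrite -lee_fin (le_trans _ (Gle Z2_0))// lee_fin Gf_ge0.
  apply: ge_ereal_sup => _ [x _ <-].
  apply: (le_trans (@bound1 R q1 t n f q1_ge0 ht x)).
  apply: (@le_trans _ _ (esumZ2 (fun z => mm%:E * (Kf q1 t n (Z2_sub x z))%:E))).
    apply: le_esumZ2 => z; rewrite -EFinM lee_fin [X in (_ <= X)%R]mulrC.
    by apply: ler_wpM2l; [exact: Kf_ge0 | rewrite -lee_fin; exact: Gle].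
  rewrite esumZ2_scale//; last by move=> z; rewrite lee_fin Kf_ge0.
  by rewrite muleC; apply: lee_wpmul2r; [rewrite lee_fin | exact: Ksum1].
- by rewrite gt0_muley ?leey// lte_fin.
- by have := Gle Z2_0; rewrite leeNy_eq.
Qed.

Lemma claim_fin2 (R : realType) q1 (c t : R) n f (q1_ge0 : forall x, (0 <= q1 x)%R)
  (ht : (0 <= t)%R) (hn : (0 < n)%N) (Cpos : (0 < Cc c t n)%R)
  (hc3 : esumZ2 (fun y => (Kf q1 t n y)%:E) <= (Cc c t n)%:E)
  (hc4 : forall y, (Kf q1 t n y <= Cc c t n / n%:R)%R) (P : R) (P1 : (1 <= P)%R) :
  lpnorm +oo (Ff q1 t n f) <=
    (Cc c t n / n%:R `^ P^-1)%:E * lpnorm P%:E (fun x => (f x / wt t x)%R).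
Proof.
have P0 : (0 < P)%R by apply: lt_le_trans P1.
have n0 : (0 < n%:R :> R)%R by rewrite ltr0n.
set C := Cc c t n.
rewrite /lpnorm /=.
apply: ge_ereal_sup => _ [x _ <-].
have J := jensen f q1_ge0 ht Cpos hc3 P1 x.
have J2 : esumZ2 (fun z => (Kf q1 t n (Z2_sub x z) * Gf t f z `^ P)%:E) <=
    (C / n%:R)%:E * esumZ2 (fun z => (Gf t f z `^ P)%:E).
  rewrite -esumZ2_scale; last 2 first.
  - by rewrite divr_ge0// ltW.
  - by move=> z; rewrite lee_fin powR_ge0.
  apply: le_esumZ2 => z; rewrite -EFinM lee_fin.
  by apply: ler_wpM2r; [exact: powR_ge0 | exact: hc4].
have S0 : 0 <= esumZ2 (fun z => (Gf t f z `^ P)%:E).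
  by apply: esumZ2_ge0 => z; rewrite lee_fin powR_ge0.
move: (esumZ2 (fun z => (Gf t f z `^ P)%:E)) S0 J2 => S S0 J2.
case: S S0 J2 => [s| |]// S0 J2; last first.
  rewrite poweRyr ?invr_neq0 ?gt_eqF// gt0_muley ?leey// lte_fin.
  by rewrite divr_gt0// powR_gt0.
have Cp0 : 0 <= (C `^ (P - 1))%:E by rewrite lee_fin powR_ge0.
have J3 := le_trans J (lee_wpmul2l Cp0 J2).
rewrite -!EFinM lee_fin in J3.
rewrite poweR_EFin -EFinM lee_fin.
have s0 : (0 <= s)%R by rewrite -lee_fin.
set a := `|Ff q1 t n f x|%R.
have a0 : (0 <= a)%R by apply: normr_ge0.
have -> : a = ((a `^ P) `^ P^-1)%R by rewrite -powRrM divff ?gt_eqF// powRr1.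
apply: (le_trans (ge0_ler_powR _ _ _ J3)).
- by rewrite invr_ge0 ltW.
- by rewrite nnegrE powR_ge0.
- by rewrite nnegrE mulr_ge0 ?powR_ge0// mulr_ge0// divr_ge0// ltW.
have -> : (C `^ (P - 1) * (C / n%:R * s) = C `^ P * (n%:R^-1 * s))%R.
  by rewrite -(mulr_powRB1 (ltW Cpos) P0) /C; ring.
rewrite powRM ?powR_ge0 ?mulr_ge0 ?invr_ge0 ?ler0n//.
rewrite -powRrM divff ?gt_eqF// powRr1; last exact: ltW.
rewrite powRM ?invr_ge0 ?ler0n// powR_inv_base//.
by rewrite !mulrA.
Qed.

End Main6.

Unset Implicit Arguments.
Theorem lemma4p17 (R : realType) (q1 : Z2 -> R)
  (* q1 is the law of the increments: a probability distribution on Z^2 *)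
  (q1_ge0 : forall x, 0 <= q1 x)
  (q1_sum1 : esumZ2 (fun x => (q1 x)%:E) = 1%E)
  (* symmetric increments *)
  (q1_sym : forall x, q1 x = q1 (Z2_opp x))
  (* sub-Gaussian increments *)
  (q1_subG : exists c0 : R, 0 < c0 /\ forall (t : R) (a : 'I_2),
      (esumZ2 (fun x => (expR (t * Z2_coord R a x) * q1 x)%:E)
        <= (expR (c0 * t ^+ 2 / 2))%:E)%E)
  (* the constant c of the context *)
  (c : R) (c_ge1 : 1 <= c)
  (hc1 : forall (t : R) (n : nat) (a : 'I_2), 0 <= t -> (0 < n)%N ->
      (esumZ2 (fun x => (expR (t * Z2_coord R a x) * qn q1 n x)%:E)
        <= (expR (c * t ^+ 2 * n%:R / 2))%:E)%E)
  (hc2 : forall (t : R) (n : nat) (a : 'I_2), 0 <= t -> (0 < n)%N ->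
      (esumZ2 (fun x => (expR (t * Z2_coord R a x) * (qn q1 n x) ^+ 2
                          / qn q1 (2 * n) Z2_0)%:E)
        <= (expR (c * t ^+ 2 * n%:R / 2))%:E)%E)
  (hc3 : forall (t : R) (n : nat), 0 <= t -> (0 < n)%N ->
      (esumZ2 (fun x => (expR (t * Z2_norm R x) * qn q1 n x)%:E)
        <= (c * expR (2 * c * t ^+ 2 * n%:R))%:E)%E)
  (hc4 : forall (t : R) (n : nat) (x : Z2), 0 <= t -> (0 < n)%N ->
      expR (t * Z2_norm R x) * qn q1 n x <= c * expR (2 * c * t ^+ 2 * n%:R) / n%:R)
  (f : Z2 -> R) (t : R) (n : nat) (p : \bar R)
  (ht : 0 <= t) (hn : (0 < n)%N) (hp : (1 <= p)%E) :
  (lpnorm p (fun x => (qfn q1 n f x / wt t x)%R)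
     <= (c * expR (2 * c * t ^+ 2 * n%:R))%:E * lpnorm p (fun x => (f x / wt t x)%R))%E
  /\
  (lpnorm +oo%E (fun x => (qfn q1 n f x / wt t x)%R)
     <= (c * expR (2 * c * t ^+ 2 * n%:R) / nroot_p n p)%:E
        * lpnorm p (fun x => (f x / wt t x)%R))%E.
Proof.
have Cpos : (0 < Cc c t n)%R.
  by rewrite /Cc mulr_gt0 ?expR_gt0// (lt_le_trans ltr01 c_ge1).
have hc3' : (esumZ2 (fun y => (Kf q1 t n y)%:E) <= (Cc c t n)%:E)%E := hc3 t n ht hn.
have hc4' : forall y, (Kf q1 t n y <= Cc c t n / n%:R)%R := fun y => hc4 t n y ht hn.
case: p hp => [P| |] hp.
- have P1 : (1 <= P)%R by rewrite -lee_fin.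
  split; first exact: claim_fin1.
  rewrite /nroot_p /=; exact: claim_fin2.
- split; first exact: claim_inf.
  rewrite /nroot_p /= divr1; exact: claim_inf.
- by [].
Qed.
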